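(* The perimeter $L^\dagger$ of the focus-inversive triangle is the same for all 3-periodics of $\mathcal{E}$, namely \[L^\dagger=\rho^2\,\frac{\sqrt{(8a^4+4a^2b^2+2b^4)\delta+8a^6+3a^2b^4+2b^6}}{a^2b^2}.\]
   Context: Let $a>b>0$ and let $\mathcal{E}$ be the ellipse $x^2/a^2+y^2/b^2=1$ (the elliptic billiard). Set $c=\sqrt{a^2-b^2}$, $\delta=\sqrt{a^4-a^2b^2+b^4}$, and let the foci be $f_1=(-c,0)$, $f_2=(c,0)$. A 3-periodic is a triangle $P_1P_2P_3$ with vertices on $\mathcal{E}$ such that at each vertex the normal to $\mathcal{E}$ bisects the angle formed by the two sides meeting at that vertex; these form a one-parameter family (there is one through every point of $\mathcal{E}$). Fix $\rho>0$. The focus-inversive triangle of a 3-periodic $P_1P_2P_3$ is the triangle with vertices $P_i^\dagger=f_1+(\rho/d_{1,i})^2(P_i-f_1)$, where $d_{1,i}=|P_i-f_1|$, i.e. the inversions of the $P_i$ in the circle of radius $\rho$ centered at $f_1$. *)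

(* Defs.v *)
From Stdlib Require Import Reals.
Open Scope R_scope.

Definition pt := (R * R)%type.

Definition dist (p q : pt) : R :=
  sqrt ((fst p - fst q) ^ 2 + (snd p - snd q) ^ 2).

Definition on_ellipse (a b : R) (p : pt) : Prop :=
  (fst p) ^ 2 / a ^ 2 + (snd p) ^ 2 / b ^ 2 = 1.

(* At vertex p of the ellipse, with neighbouring vertices q and s, the normal
   to the ellipse (direction (x/a^2, y/b^2)) bisects the angle q p s, i.e. it is
   parallel to the sum of the unit vectors from p towards q and towards s
   (the internal bisector direction). *)
Definition normal_bisects (a b : R) (p q s : pt) : Prop :=
  let ux := (fst q - fst p) / dist q p in
  let uy := (snd q - snd p) / dist q p in
  let vx := (fst s - fst p) / dist s p in
  let vy := (snd s - snd p) / dist s p in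
  let nx := fst p / a ^ 2 in
  let ny := snd p / b ^ 2 in
  (ux + vx) * ny - (uy + vy) * nx = 0.

Definition is_3periodic (a b : R) (P1 P2 P3 : pt) : Prop :=
  on_ellipse a b P1 /\ on_ellipse a b P2 /\ on_ellipse a b P3 /\
  P1 <> P2 /\ P2 <> P3 /\ P3 <> P1 /\
  normal_bisects a b P1 P3 P2 /\
  normal_bisects a b P2 P1 P3 /\
  normal_bisects a b P3 P2 P1.

Definition invert (rho : R) (f p : pt) : pt :=
  let k := (rho / dist p f) ^ 2 in
  (fst f + k * (fst p - fst f), snd f + k * (snd p - snd f)).

Definition focus1 (a b : R) : pt := (- sqrt (a ^ 2 - b ^ 2), 0).

Definition focus_inversive_perimeter (a b rho : R) (P1 P2 P3 : pt) : R :=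
  let f1 := focus1 a b in
  let Q1 := invert rho f1 P1 in
  let Q2 := invert rho f1 P2 in
  let Q3 := invert rho f1 P3 in
  dist Q1 Q2 + dist Q2 Q3 + dist Q3 Q1.

(* Main.v *)
Require Import Defs.
From Stdlib Require Import Reals.
Open Scope R_scope.
From Stdlib Require Import Lra Psatz.
Import Defs.


Lemma deg_case (S R X1 Y1 X2 Y2 X3 Y3 : R) :
  0 < S ->
  X1^2 + Y1^2 = 1 -> X2^2 + Y2^2 = 1 -> X3^2 + Y3^2 = 1 ->
  ~ (X1 = X2 /\ Y1 = Y2) ->
  (1-S)*X1*X2 + (1+S)*Y1*Y2 = R ->
  (1-S)*X1*X3 + (1+S)*Y1*Y3 = R ->
  (1-S)*X2*X3 + (1+S)*Y2*Y3 = R ->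
  X1 = X2 ->
  Y2 = - Y1 /\ Y1 <> 0 /\ Y3 = 0 /\ X3^2 = 1 /\ 2*X1^2 = R + (1+S)
  /\ (1-S)*X1*X3 = R.
Proof.
  intros HS C1 C2 C3 D12 L12 L13 L23 E12.
  subst X2.
  assert (HY: (Y1 - Y2)*(Y1+Y2) = 0).
  { replace ((Y1 - Y2)*(Y1+Y2)) with (Y1^2 - Y2^2) by ring. lra. }
  assert (Hne : Y1 <> Y2) by (intro; apply D12; auto).
  assert (HY2 : Y2 = - Y1).
  { destruct (Rmult_integral _ _ HY) as [h|h]; [exfalso; apply Hne; lra| lra]. }
  subst Y2.
  assert (Y1 <> 0) by (intro; apply Hne; lra).
  assert (HY3 : Y3 = 0).
  { assert (h0 : (1+S)*Y3*(2*Y1) = 0).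
    { replace ((1+S)*Y3*(2*Y1)) with
        (((1-S)*X1*X3 + (1+S)*Y1*Y3) - ((1-S)*X1*X3 + (1+S)*(-Y1)*Y3)) by ring.
      lra. }
    destruct (Rmult_integral _ _ h0) as [h|h]; [|lra].
    destruct (Rmult_integral _ _ h) as [h'|h']; lra. }
  subst Y3.
  assert (X3^2 = 1) by (replace (X3^2) with (X3^2 + 0^2) by ring; exact C3).
  split; [reflexivity|]. split; [assumption|]. split; [reflexivity|].
  split; [assumption|]. split; [|lra].
  replace (2*X1^2) with (((1-S)*X1*X1 + (1+S)*Y1*(-Y1)) + (1+S)*(X1^2+Y1^2)) by ring.
  rewrite C1, L12. ring.
Qed.


Lemma Fid (S R X1 Y1 X2 Y2 X3 Y3 : R) :
  X1^2 + Y1^2 = 1 ->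
  (1-S)*X1*X2 + (1+S)*Y1*Y2 = R ->
  (1-S)*X1*X3 + (1+S)*Y1*Y3 = R ->
  (1-S)*X2*X3 + (1+S)*Y2*Y3 = R ->
  (R-(1-S)*X1*X2)*(R-(1-S)*X1*X3) - (1+S)*(1-X1^2)*(R-(1-S)*X2*X3) = 0.
Proof.
  intros C1 L12 L13 L23.
  rewrite <- L12 at 1. rewrite <- L13 at 1. rewrite <- L23 at 1.
  replace (1 - X1^2) with (Y1^2) by lra. ring.
Qed.

Lemma core1 (S R X1 Y1 X2 Y2 X3 Y3 : R) :
  0 < S ->
  X1^2 + Y1^2 = 1 -> X2^2 + Y2^2 = 1 -> X3^2 + Y3^2 = 1 ->
  ~ (X1 = X2 /\ Y1 = Y2) -> ~ (X1 = X3 /\ Y1 = Y3) -> ~ (X2 = X3 /\ Y2 = Y3) ->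
  (1-S)*X1*X2 + (1+S)*Y1*Y2 = R ->
  (1-S)*X1*X3 + (1+S)*Y1*Y3 = R ->
  (1-S)*X2*X3 + (1+S)*Y2*Y3 = R ->
  S^2 - 2*R - 1 = 0.
Proof.
  intros HS C1 C2 C3 D12 D13 D23 L12 L13 L23.
  assert (degE : forall X1 Y1 X2 Y2 X3 Y3,
    X1^2 + Y1^2 = 1 -> X2^2 + Y2^2 = 1 -> X3^2 + Y3^2 = 1 ->
    ~ (X1 = X2 /\ Y1 = Y2) ->
    (1-S)*X1*X2 + (1+S)*Y1*Y2 = R ->
    (1-S)*X1*X3 + (1+S)*Y1*Y3 = R ->
    (1-S)*X2*X3 + (1+S)*Y2*Y3 = R ->
    X1 = X2 -> S^2 - 2*R - 1 = 0).
  { intros x1 y1 x2 y2 x3 y3 c1 c2 c3 d l12 l13 l23 e.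
    destruct (deg_case S R x1 y1 x2 y2 x3 y3 HS c1 c2 c3 d l12 l13 l23 e)
      as [h1 [h2 [h3 [h4 [h5 h6]]]]].
    assert (hA : (1-S)^2*x1^2 = R^2).
    { rewrite <- h6. replace (((1-S)*x1*x3)^2) with ((1-S)^2*x1^2*x3^2) by ring.
      rewrite h4; ring. }
    assert (Hq : (R - (1-S)) * (2*R + (1-S)*(1+S)) = 0).
    { replace ((R - (1-S)) * (2*R + (1-S)*(1+S))) with
        (-2*((1-S)^2*x1^2 - R^2) + (1-S)^2*(2*x1^2 - R - (1+S)) + (1-S)*R*((1-S)+(1+S)-2))
        by ring.
      rewrite hA, h5. ring. }
    destruct (Rmult_integral _ _ Hq) as [h|h].
    - exfalso. apply h2.
      assert (hy : y1*y1 = 0).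
      { replace (y1*y1) with (1 - x1^2) by (rewrite <- c1; ring). lra. }
      destruct (Rmult_integral _ _ hy); assumption.
    - replace (S^2 - 2*R - 1) with (-(2*R + (1-S)*(1+S))) by ring. rewrite h. ring. }
  destruct (Req_dec X1 X2) as [e|n12].
  { exact (degE X1 Y1 X2 Y2 X3 Y3 C1 C2 C3 D12 L12 L13 L23 e). }
  destruct (Req_dec X1 X3) as [e|n13].
  { apply (degE X1 Y1 X3 Y3 X2 Y2 C1 C3 C2 D13 L13 L12); [rewrite <- L23; ring| exact e]. }
  destruct (Req_dec X2 X3) as [e|n23].
  { apply (degE X2 Y2 X3 Y3 X1 Y1 C2 C3 C1 D23 L23);
      [rewrite <- L12; ring | rewrite <- L13; ring | exact e]. }
  pose proof (Fid S R X1 Y1 X2 Y2 X3 Y3 C1 L12 L13 L23) as F1.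
  assert (L21 : (1-S)*X2*X1 + (1+S)*Y2*Y1 = R) by (rewrite <- L12; ring).
  assert (L31 : (1-S)*X3*X1 + (1+S)*Y3*Y1 = R) by (rewrite <- L13; ring).
  assert (L32 : (1-S)*X3*X2 + (1+S)*Y3*Y2 = R) by (rewrite <- L23; ring).
  pose proof (Fid S R X2 Y2 X1 Y1 X3 Y3 C2 L21 L23 L13) as F2.
  pose proof (Fid S R X3 Y3 X1 Y1 X2 Y2 C3 L31 L32 L12) as F3.
  assert (G3 : R*(1+S)*(X1+X2) - (1-S)*((1+S)+R)*X3 - 2*S*(1-S)*(X1*X2*X3) = 0).
  { assert (h : (X1-X2)*(R*(1+S)*(X1+X2) - (1-S)*((1+S)+R)*X3 - 2*S*(1-S)*(X1*X2*X3)) = 0).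
    { match type of F1 with ?A = 0 => match type of F2 with ?B = 0 =>
        transitivity (A - B); [ring | lra] end end. }
    destruct (Rmult_integral _ _ h) as [h'|h']; [exfalso; apply n12; lra| exact h']. }
  assert (G2 : R*(1+S)*(X1+X3) - (1-S)*((1+S)+R)*X2 - 2*S*(1-S)*(X1*X2*X3) = 0).
  { assert (h : (X1-X3)*(R*(1+S)*(X1+X3) - (1-S)*((1+S)+R)*X2 - 2*S*(1-S)*(X1*X2*X3)) = 0).
    { match type of F1 with ?A = 0 => match type of F3 with ?B = 0 =>
        transitivity (A - B); [ring | lra] end end. }
    destruct (Rmult_integral _ _ h) as [h'|h']; [exfalso; apply n13; lra| exact h']. }
  assert (h : (X2 - X3) * (S^2 - 2*R - 1) = 0).
  { match type of G3 with ?A = 0 => match type of G2 with ?B = 0 =>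
        transitivity (-(A - B)); [ring | lra] end end. }
  destruct (Rmult_integral _ _ h) as [h'|h']; [exfalso; apply n23; lra| exact h'].
Qed.


Lemma core2 (S R X1 Y1 X2 Y2 X3 Y3 : R) :
  0 < S -> S < 1 -> S^2 - 2*R - 1 = 0 ->
  X1^2 + Y1^2 = 1 -> X2^2 + Y2^2 = 1 -> X3^2 + Y3^2 = 1 ->
  ~ (X1 = X2 /\ Y1 = Y2) ->
  (1-S)*X1*X2 + (1+S)*Y1*Y2 = R ->
  (1-S)*X1*X3 + (1+S)*Y1*Y3 = R ->
  (1-S)*X2*X3 + (1+S)*Y2*Y3 = R ->
  2*(X1*X2+X1*X3+X2*X3) = R - (1+S) /\
  2*S*(1-S)*(X1*X2*X3) = R*(1+S)*(X1+X2+X3).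
Proof.
  intros HS HS1 HE C1 C2 C3 D12 L12 L13 L23.
  assert (HR : R = -(1-S)*(1+S)/2) by (replace R with ((S^2 - 1 - (S^2 - 2*R - 1))/2) by field; rewrite HE; field).
  assert (HRn : R <> 0).
  { rewrite HR. assert (0 < (1-S)*(1+S)) by (apply Rmult_lt_0_compat; lra). lra. }
  destruct (Req_dec X1 X2) as [e|n12].
  - destruct (deg_case S R X1 Y1 X2 Y2 X3 Y3 HS C1 C2 C3 D12 L12 L13 L23 e)
      as [h1 [h2 [h3 [h4 [h5 h6]]]]].
    subst X2.
    assert (hx : X1*X3 = -(1+S)/2).
    { apply (Rmult_eq_reg_l (1-S)); [|lra].
      transitivity R; [rewrite <- h6; ring | rewrite HR; field]. }
    split.
    + replace (2 * (X1 * X1 + X1 * X3 + X1 * X3)) with (2*X1^2 + 4*(X1*X3)) by ring.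
      rewrite h5, hx. field.
    + assert (hx2 : -2*X1 = (1+S)*X3).
      { replace (-2*X1) with (-2*X1*X3^2) by (rewrite h4; ring).
        replace (-2*X1*X3^2) with (-2*(X1*X3)*X3) by ring. rewrite hx. field. }
      replace (2 * S * (1 - S) * (X1 * X1 * X3)) with (2*S*X1*((1-S)*X1*X3)) by ring.
      rewrite h6.
      replace (R * (1 + S) * (X1 + X1 + X3)) with (2*R*(1+S)*X1 + R*((1+S)*X3)) by ring.
      rewrite <- hx2. ring.
  - pose proof (Fid S R X1 Y1 X2 Y2 X3 Y3 C1 L12 L13 L23) as F1.
    assert (L21 : (1-S)*X2*X1 + (1+S)*Y2*Y1 = R) by (rewrite <- L12; ring).
    pose proof (Fid S R X2 Y2 X1 Y1 X3 Y3 C2 L21 L23 L13) as F2.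
    assert (G3 : R*(1+S)*(X1+X2) - (1-S)*((1+S)+R)*X3 - 2*S*(1-S)*(X1*X2*X3) = 0).
    { assert (h : (X1-X2)*(R*(1+S)*(X1+X2) - (1-S)*((1+S)+R)*X3 - 2*S*(1-S)*(X1*X2*X3)) = 0).
      { match type of F1 with ?A = 0 => match type of F2 with ?B = 0 =>
          transitivity (A - B); [ring | lra] end end. }
      destruct (Rmult_integral _ _ h) as [h'|h']; [exfalso; apply n12; lra| exact h']. }
    assert (He3 : 2*S*(1-S)*(X1*X2*X3) = R*(1+S)*(X1+X2+X3)).
    { match type of G3 with ?A = 0 => match type of HE with ?B = 0 =>
        transitivity (2*S*(1-S)*(X1*X2*X3) + A - X3*B); [rewrite G3, HE; ring | ring] end end. }
    split; [|exact He3].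
    assert (h : R * (2*(X1*X2+X1*X3+X2*X3) - R + (1+S)) = 0).
    { match type of F1 with ?A = 0 => match type of G3 with ?B = 0 => match type of HE with ?C = 0 =>
        transitivity (- A + X1*B - (X1+X2)*X3*C); [ring | rewrite F1, G3, HE; ring] end end end. }
    destruct (Rmult_integral _ _ h) as [h'|h']; [contradiction| lra].
Qed.


Lemma bisect_alg (a b px py qx qy sx sy dq ds : R) :
  0 < a -> 0 < b ->
  px^2/a^2 + py^2/b^2 = 1 -> qx^2/a^2 + qy^2/b^2 = 1 -> sx^2/a^2 + sy^2/b^2 = 1 ->
  0 < dq -> 0 < ds ->
  dq^2 = (qx-px)^2 + (qy-py)^2 -> ds^2 = (sx-px)^2 + (sy-py)^2 ->
  ~ (sx = px /\ sy = py) ->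
  ((qx-px)/dq + (sx-px)/ds) * (py/b^2) - ((qy-py)/dq + (sy-py)/ds) * (px/a^2) = 0 ->
  (1 - px*qx/a^2 - py*qy/b^2) * ds = (1 - px*sx/a^2 - py*sy/b^2) * dq.
Proof.
  intros Ha Hb Cp Cq Cs Hdq Hds Eq Es Dsp H.
  set (nx := px/a^2). set (ny := py/b^2).
  set (Sx := (qx-px)*ds + (sx-px)*dq). set (Sy := (qy-py)*ds + (sy-py)*dq).
  set (Dx := (qx-px)*ds - (sx-px)*dq). set (Dy := (qy-py)*ds - (sy-py)*dq).
  assert (H' : Sx*ny - Sy*nx = 0).
  { replace (Sx*ny - Sy*nx) with
      (dq*ds*(((qx-px)/dq + (sx-px)/ds) * (py/b^2) - ((qy-py)/dq + (sy-py)/ds) * (px/a^2)))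
      by (unfold Sx, Sy, nx, ny; field; lra).
    rewrite H; ring. }
  assert (DS : Dx*Sx + Dy*Sy = 0).
  { replace (Dx*Sx + Dy*Sy) with (((qx-px)^2 + (qy-py)^2)*ds^2 - ((sx-px)^2 + (sy-py)^2)*dq^2)
      by (unfold Dx, Sx, Dy, Sy; ring).
    rewrite <- Eq, <- Es. ring. }
  set (T := Dx*nx + Dy*ny).
  assert (TSx : T*Sx = 0).
  { replace (T*Sx) with (nx*(Dx*Sx + Dy*Sy) + Dy*(Sx*ny - Sy*nx)) by (unfold T; ring).
    rewrite DS, H'; ring. }
  assert (TSy : T*Sy = 0).
  { replace (T*Sy) with (ny*(Dx*Sx + Dy*Sy) - Dx*(Sx*ny - Sy*nx)) by (unfold T; ring).
    rewrite DS, H'; ring. }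
  destruct (Req_dec T 0) as [HT|HT].
  - assert (Tform : T = (1 - px*sx/a^2 - py*sy/b^2) * dq - (1 - px*qx/a^2 - py*qy/b^2) * ds).
    { transitivity ((1 - px*sx/a^2 - py*sy/b^2) * dq - (1 - px*qx/a^2 - py*qy/b^2) * ds
        - (ds - dq)*(px^2/a^2 + py^2/b^2 - 1)).
      unfold T, Dx, Dy, nx, ny. field; lra. rewrite Cp; ring. }
    lra.
  - exfalso.
    assert (HSx : Sx = 0) by (destruct (Rmult_integral _ _ TSx); [contradiction|assumption]).
    assert (HSy : Sy = 0) by (destruct (Rmult_integral _ _ TSy); [contradiction|assumption]).
    set (Ax := qx - px). set (Ay := qy - py). set (Bx := sx - px). set (By := sy - py).
    assert (eA : 2*(px*Ax/a^2 + py*Ay/b^2) + (Ax^2/a^2 + Ay^2/b^2) = 0).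
    { replace (2*(px*Ax/a^2 + py*Ay/b^2) + (Ax^2/a^2 + Ay^2/b^2))
        with ((qx^2/a^2 + qy^2/b^2) - (px^2/a^2 + py^2/b^2)) by (unfold Ax, Ay; field; lra).
      rewrite Cp, Cq; ring. }
    assert (eB : 2*(px*Bx/a^2 + py*By/b^2) + (Bx^2/a^2 + By^2/b^2) = 0).
    { replace (2*(px*Bx/a^2 + py*By/b^2) + (Bx^2/a^2 + By^2/b^2))
        with ((sx^2/a^2 + sy^2/b^2) - (px^2/a^2 + py^2/b^2)) by (unfold Bx, By; field; lra).
      rewrite Cp, Cs; ring. }
    assert (hAx : Ax*ds = - Bx*dq) by (unfold Sx in HSx; fold Ax Bx in HSx; lra).
    assert (hAy : Ay*ds = - By*dq) by (unfold Sy in HSy; fold Ay By in HSy; lra).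
    set (QB := Bx^2/a^2 + By^2/b^2).
    assert (hQ : (ds + dq) * dq * QB = 0).
    { replace ((ds + dq) * dq * QB) with
        (ds^2 * (2*(px*Ax/a^2 + py*Ay/b^2) + (Ax^2/a^2 + Ay^2/b^2)) + ds*dq*(2*(px*Bx/a^2 + py*By/b^2) + (Bx^2/a^2 + By^2/b^2))
         - (2*ds*(px*(Ax*ds + Bx*dq)/a^2 + py*(Ay*ds+By*dq)/b^2))
         - ((Ax*ds - Bx*dq)*(Ax*ds + Bx*dq)/a^2 + (Ay*ds - By*dq)*(Ay*ds+By*dq)/b^2)
         + 0) by (unfold QB; field; lra).
      rewrite eA, eB.
      replace (Ax*ds + Bx*dq) with 0 by lra. replace (Ay*ds + By*dq) with 0 by lra.
      field; lra. }
    assert (QB0 : QB = 0).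
    { destruct (Rmult_integral _ _ hQ) as [h|h].
      - destruct (Rmult_integral _ _ h); lra.
      - exact h. }
    apply Dsp.
    assert (Bx^2/a^2 >= 0).
    { unfold Rdiv. apply Rle_ge, Rmult_le_pos; [nra | apply Rlt_le, Rinv_0_lt_compat; nra]. }
    assert (By^2/b^2 >= 0).
    { unfold Rdiv. apply Rle_ge, Rmult_le_pos; [nra | apply Rlt_le, Rinv_0_lt_compat; nra]. }
    assert (hbx : Bx^2/a^2 = 0) by (unfold QB in QB0; lra).
    assert (hby : By^2/b^2 = 0) by (unfold QB in QB0; lra).
    assert (Bx = 0).
    { assert (Bx^2 = 0).
      { replace (Bx^2) with (Bx^2/a^2 * a^2) by (field; lra). rewrite hbx; ring. }
      nra. }
    assert (By = 0).
    { assert (By^2 = 0).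
      { replace (By^2) with (By^2/b^2 * b^2) by (field; lra). rewrite hby; ring. }
      nra. }
    unfold Bx, By in *. split; lra.
Qed.


Lemma final1 (a c K X1 X2 X3 : R) :
  let S := K*c^2 in let R := 1 - K*(2*a^2 - c^2) in
  S^2 - 2*R - 1 = 0 ->
  2*(X1*X2+X1*X3+X2*X3) = R - (1+S) ->
  2*S*(1-S)*(X1*X2*X3) = R*(1+S)*(X1+X2+X3) ->
  S*(1-S)^2 * ((1+S-R-2*S*(X1*X2))*(a+c*X3) + (1+S-R-2*S*(X2*X3))*(a+c*X1)
                + (1+S-R-2*S*(X1*X3))*(a+c*X2))
  = 2*K*S*(1-S)*(3+S) * ((a+c*X1)*(a+c*X2)*(a+c*X3)).
Proof.
  intros S R H h2 h3.
  apply Rminus_diag_uniq.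
  set (e1 := X1+X2+X3). set (e2 := X1*X2+X1*X3+X2*X3). set (e3 := X1*X2*X3).
  assert (h2' : 2*e2 - (R - (1+S)) = 0) by (unfold e2; lra).
  assert (h3' : 2*S*(1-S)*e3 - R*(1+S)*e1 = 0) by (unfold e1, e3; lra).
  transitivity ((-4*K^2*a*c^4 + 4*K^3*a*c^6)*(2*e2 - (R - (1+S)))
     + (-6*K*c^3 + 2*K^2*c^5)*(2*S*(1-S)*e3 - R*(1+S)*e1)
     + 2*K*c^3*(1+K*c^2)*e1*(S^2 - 2*R - 1)).
  - unfold e1, e2, e3, S, R. ring.
  - rewrite h2', h3', H. ring.
Qed.

Lemma final2 (a b c K : R) :
  let S := K*c^2 in let R := 1 - K*(2*a^2 - c^2) in
  b^2 = a^2 - c^2 ->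
  S^2 - 2*R - 1 = 0 ->
  let d := (K*c^4 + 2*a^2 - c^2)/2 in
  4*K*(3+S)^2*a^4*b^4 = (1-S)^2*(1+S)^2 *
     ((8 * a ^ 4 + 4 * a ^ 2 * b ^ 2 + 2 * b ^ 4) * d
             + 8 * a ^ 6 + 3 * a ^ 2 * b ^ 4 + 2 * b ^ 6).
Proof.
  intros S R Hb H d.
  replace (b^4) with ((b^2)^2) by ring. replace (b^6) with ((b^2)^3) by ring.
  rewrite Hb.
  apply Rminus_diag_uniq.
  transitivity (((-6)*K*a^2*c^6 + 3*K*a^4*c^4 + 6*K*a^6*c^2 + K*c^8 + (-3)*K^2*a^2*c^8 + (-3)*K^2*a^4*c^6 + K^2*a^6*c^4 + K^2*c^10 + 4*K^3*a^2*c^10 + (-7)*K^3*a^4*c^8 + (-1)*K^3*c^12 + 5*a^2*c^4 + (-9)*a^4*c^2 + 9*a^6 + (-1)*c^6) * (S^2 - 2*R - 1)).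
  - unfold d, S, R. field.
  - rewrite H. ring.
Qed.

Lemma delta_eq (a b c K : R) :
  let S := K*c^2 in let R := 1 - K*(2*a^2 - c^2) in
  b^2 = a^2 - c^2 -> 0 < K -> b^2 < a^2 ->
  S^2 - 2*R - 1 = 0 ->
  sqrt (a ^ 4 - a ^ 2 * b ^ 2 + b ^ 4) = (K*c^4 + 2*a^2 - c^2)/2.
Proof.
  intros S R Hb HK Hab H.
  assert (Hc2 : 0 < c^2) by lra.
  assert (Hpos : 0 <= (K*c^4 + 2*a^2 - c^2)/2).
  { assert (0 <= K*c^4) by (replace (c^4) with (c^2*c^2) by ring; apply Rmult_le_pos; [lra| nra]).
    assert (0 <= a^2) by nra. assert (0 <= b^2) by nra. lra. }
  rewrite <- (sqrt_square _ Hpos). f_equal.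
  replace (b^4) with ((b^2)^2) by ring. rewrite Hb.
  apply Rminus_diag_uniq.
  transitivity (- c^4/4 * (S^2 - 2*R - 1)).
  - unfold S, R. field.
  - rewrite H. ring.
Qed.

Lemma S_lt_1 (a b c K : R) :
  let S := K*c^2 in let R := 1 - K*(2*a^2 - c^2) in
  b^2 = a^2 - c^2 -> 0 < b -> 0 < K ->
  S^2 - 2*R - 1 = 0 -> S < 1.
Proof.
  intros S R Hb Hb0 HK H.
  unfold R in H.
  assert (0 < K*b^2) by (apply Rmult_lt_0_compat; nra).
  assert (0 <= S) by (unfold S; apply Rmult_le_pos; nra).
  destruct (Rlt_or_le S 1) as [h|h]; [exact h|].
  exfalso.
  assert (1 <= S^2) by nra.
  replace (K*(2*a^2 - c^2)) with (S + 2*(K*b^2)) in H by (unfold S; rewrite Hb; ring).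
  lra.
Qed.


Lemma dist_sym p q : dist p q = dist q p.
Proof. unfold dist. f_equal. ring. Qed.

Lemma dist_sq p q : (dist p q)^2 = (fst p - fst q)^2 + (snd p - snd q)^2.
Proof. unfold dist. rewrite pow2_sqrt; [reflexivity| apply Rplus_le_le_0_compat; apply pow2_ge_0]. Qed.

Lemma dist_pos p q : p <> q -> 0 < dist p q.
Proof.
  intro H. unfold dist. apply sqrt_lt_R0.
  destruct p as [px py], q as [qx qy]; simpl.
  destruct (Req_dec px qx); destruct (Req_dec py qy).
  - subst. exfalso; apply H; reflexivity.
  - assert (0 < Rsqr (py-qy)) by (apply Rsqr_pos_lt; lra). unfold Rsqr in *.
    assert (0 <= (px-qx)^2) by apply pow2_ge_0. nra.
  - assert (0 < Rsqr (px-qx)) by (apply Rsqr_pos_lt; lra). unfold Rsqr in *.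
    assert (0 <= (py-qy)^2) by apply pow2_ge_0. nra.
  - assert (0 < Rsqr (px-qx)) by (apply Rsqr_pos_lt; lra). unfold Rsqr in *.
    assert (0 <= (py-qy)^2) by apply pow2_ge_0. nra.
Qed.

Lemma focus_dist (a b c X Y : R) :
  0 < b -> b < a -> c = sqrt (a^2 - b^2) -> X^2 + Y^2 = 1 ->
  dist (a*X, b*Y) (focus1 a b) = a + c*X.
Proof.
  intros Hb Hba Hc HC.
  assert (Hc2 : c^2 = a^2 - b^2) by (rewrite Hc; apply pow2_sqrt; nra).
  assert (Hc0 : 0 <= c) by (rewrite Hc; apply sqrt_pos).
  assert (Hca : c < a) by nra.
  assert (HX : X^2 <= 1) by nra.
  assert (Hpos : 0 <= a + c*X).
  { assert (-1 <= X) by nra. nra. }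
  unfold dist, focus1. cbn [fst snd]. rewrite <- Hc.
  rewrite <- (sqrt_square _ Hpos). f_equal.
  replace ((b*Y - 0)^2) with (b^2*Y^2) by ring.
  replace (Y^2) with (1 - X^2) by lra.
  replace (b^2) with (a^2 - c^2) by lra. ring.
Qed.

Lemma invert_dist (rho : R) (f p q : pt) :
  0 < dist p f -> 0 < dist q f ->
  dist (invert rho f p) (invert rho f q) = rho^2 * dist p q / (dist p f * dist q f).
Proof.
  intros Hp Hq.
  pose proof (dist_sq p f) as Ep. pose proof (dist_sq q f) as Eq.
  pose proof (dist_sq p q) as Epq.
  set (dp := dist p f) in *. set (dq := dist q f) in *. set (dpq := dist p q) in *.
  assert (Hpq : 0 <= dpq) by (unfold dpq, dist; apply sqrt_pos).
  destruct f as [fx fy], p as [px py], q as [qx qy]; cbn [fst snd] in *.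
  unfold invert. cbn [fst snd]. fold dp dq. unfold dist at 1. cbn [fst snd].
  assert (Hnn : 0 <= rho^2 * dpq / (dp*dq)).
  { apply Rmult_le_pos; [apply Rmult_le_pos; [nra|lra]|].
    apply Rlt_le, Rinv_0_lt_compat, Rmult_lt_0_compat; lra. }
  rewrite <- (sqrt_square _ Hnn). f_equal. clearbody dp dq dpq.
  transitivity (rho^4 * (((px-fx)^2 + (py-fy)^2)/dp^4 - 2*((px-fx)*(qx-fx) + (py-fy)*(qy-fy))/(dp^2*dq^2)
     + ((qx-fx)^2 + (qy-fy)^2)/dq^4)).
  { field; lra. }
  rewrite <- Ep, <- Eq.
  transitivity (rho^4 * ((px - qx)^2 + (py - qy)^2 - ((px-fx)^2 + (py-fy)^2 - dp^2) - ((qx-fx)^2 + (qy-fy)^2 - dq^2)) / (dp^2*dq^2)).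
  { field; lra. }
  rewrite <- Ep, <- Eq, <- Epq. field; lra.
Qed.


Lemma g_pos (X1 Y1 X2 Y2 : R) :
  X1^2 + Y1^2 = 1 -> X2^2 + Y2^2 = 1 -> ~ (X1 = X2 /\ Y1 = Y2) ->
  0 < 1 - X1*X2 - Y1*Y2.
Proof.
  intros C1 C2 D.
  replace (1 - X1*X2 - Y1*Y2) with (((X1-X2)^2 + (Y1-Y2)^2)/2)
    by (replace 1 with ((X1^2+Y1^2 + (X2^2+Y2^2))/2) at 1 by lra; field).
  destruct (Req_dec X1 X2).
  - assert (Y1 <> Y2) by (intro; apply D; auto).
    assert (0 < Rsqr (Y1-Y2)) by (apply Rsqr_pos_lt; lra). unfold Rsqr in *.
    assert (0 <= (X1-X2)^2) by apply pow2_ge_0. nra.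
  - assert (0 < Rsqr (X1-X2)) by (apply Rsqr_pos_lt; lra). unfold Rsqr in *.
    assert (0 <= (Y1-Y2)^2) by apply pow2_ge_0. nra.
Qed.

Lemma pair_L (a b c k X1 Y1 X2 Y2 : R) :
  0 < a -> 0 < b -> c^2 = a^2 - b^2 ->
  X1^2 + Y1^2 = 1 -> X2^2 + Y2^2 = 1 -> ~ (X1 = X2 /\ Y1 = Y2) -> 0 < k ->
  1 - X1*X2 - Y1*Y2 = k * sqrt ((a*X1 - a*X2)^2 + (b*Y1 - b*Y2)^2) ->
  (1 - k^2*c^2)*X1*X2 + (1 + k^2*c^2)*Y1*Y2 = 1 - k^2*(2*a^2 - c^2).
Proof.
  intros Ha Hb Hc C1 C2 D Hk Hg.
  pose proof (g_pos X1 Y1 X2 Y2 C1 C2 D) as Hgp.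
  set (g := 1 - X1*X2 - Y1*Y2) in *.
  set (dd := sqrt ((a*X1 - a*X2)^2 + (b*Y1 - b*Y2)^2)) in *.
  assert (Hdd : dd^2 = (a*X1 - a*X2)^2 + (b*Y1 - b*Y2)^2).
  { unfold dd. apply pow2_sqrt. apply Rplus_le_le_0_compat; apply pow2_ge_0. }
  set (f := X1*X2 - Y1*Y2).
  assert (HY1 : Y1^2 = 1 - X1^2) by lra. assert (HY2 : Y2^2 = 1 - X2^2) by lra.
  assert (HX1 : X1^2 = 1 - Y1^2) by lra. assert (HX2 : X2^2 = 1 - Y2^2) by lra.
  assert (Ix : (X1-X2)^2 = (1-X1*X2)^2 - Y1^2*Y2^2) by (rewrite HY1, HY2; ring).
  assert (Iy : (Y1-Y2)^2 = (1-Y1*Y2)^2 - X1^2*X2^2) by (rewrite HX1, HX2; ring).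
  assert (Idd : dd^2 = g*(a^2*(1-f) + b^2*(1+f))).
  { rewrite Hdd.
    transitivity (a^2*(X1-X2)^2 + b^2*(Y1-Y2)^2); [ring|].
    rewrite Ix, Iy. unfold g, f. ring. }
  assert (Eg : g = 1 - X1*X2 - Y1*Y2) by reflexivity.
  assert (Ef : f = X1*X2 - Y1*Y2) by reflexivity.
  clearbody g dd f.
  assert (Hgg : g*(g - k^2*(a^2*(1-f) + b^2*(1+f))) = 0).
  { transitivity (g^2 - k^2*dd^2); [rewrite Idd; ring|].
    rewrite Hg. ring. }
  destruct (Rmult_integral _ _ Hgg) as [h|h]; [lra|].
 
  rewrite Eg, Ef in h. replace (b^2) with (a^2 - c^2) in h by lra. lra.
Qed.


Lemma fpos_lem (a c X Y : R) : 0 < c -> c < a -> X^2 + Y^2 = 1 -> 0 < a + c*X.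
Proof.
  intros h0 h1 h. assert (X^2 <= 1) by (assert (0<=Y^2) by apply pow2_ge_0; lra).
  assert (-1 <= X) by (destruct (Rle_lt_dec (-1) X) as [h'|h']; [exact h'| assert (1 < X^2) by nra; lra]).
  assert (0 <= c*(X+1)) by (apply Rmult_le_pos; lra). lra.
Qed.

Theorem mainTheorem4 (a b rho : R) (P1 P2 P3 : pt) :
  0 < b -> b < a -> 0 < rho ->
  is_3periodic a b P1 P2 P3 ->
  let delta := sqrt (a ^ 4 - a ^ 2 * b ^ 2 + b ^ 4) in
  focus_inversive_perimeter a b rho P1 P2 P3 =
    rho ^ 2 *
      (sqrt ((8 * a ^ 4 + 4 * a ^ 2 * b ^ 2 + 2 * b ^ 4) * delta
             + 8 * a ^ 6 + 3 * a ^ 2 * b ^ 4 + 2 * b ^ 6)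
       / (a ^ 2 * b ^ 2)).
Proof.
  intros Hb Hba Hrho Hper delta.
  assert (Ha : 0 < a) by lra.
  destruct P1 as [x1 y1], P2 as [x2 y2], P3 as [x3 y3].
  destruct Hper as (E1 & E2 & E3 & N12 & N23 & N31 & B1 & B2 & B3).
  unfold on_ellipse in E1, E2, E3; cbn [fst snd] in E1, E2, E3.
  assert (hX1 : exists Z, x1 = a*Z) by (exists (x1/a); field; lra).
  destruct hX1 as [X1 hx1].
  assert (hX2 : exists Z, x2 = a*Z) by (exists (x2/a); field; lra).
  destruct hX2 as [X2 hx2].
  assert (hX3 : exists Z, x3 = a*Z) by (exists (x3/a); field; lra).
  destruct hX3 as [X3 hx3].
  assert (hY1 : exists Z, y1 = b*Z) by (exists (y1/b); field; lra).
  destruct hY1 as [Y1 hy1].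
  assert (hY2 : exists Z, y2 = b*Z) by (exists (y2/b); field; lra).
  destruct hY2 as [Y2 hy2].
  assert (hY3 : exists Z, y3 = b*Z) by (exists (y3/b); field; lra).
  destruct hY3 as [Y3 hy3].
  subst x1 x2 x3 y1 y2 y3.
  assert (circ : forall X Y, (a*X)^2/a^2 + (b*Y)^2/b^2 = 1 -> X^2 + Y^2 = 1).
  { intros X Y h. rewrite <- h. field. lra. }
  pose proof (circ _ _ E1) as C1. pose proof (circ _ _ E2) as C2. pose proof (circ _ _ E3) as C3.
  assert (dst : forall X Y X' Y', (a*X, b*Y) <> (a*X', b*Y') -> ~ (X = X' /\ Y = Y')).
  { intros X Y X' Y' h [e e']. apply h. subst. reflexivity. }
  pose proof (dst _ _ _ _ N12) as D12. pose proof (dst _ _ _ _ N23) as D23.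
  pose proof (dst _ _ _ _ N31) as D31.
  assert (D13 : ~ (X1 = X3 /\ Y1 = Y3)) by (intros [e e']; apply D31; auto).
  set (c := sqrt (a^2 - b^2)).
  assert (Hc2 : c^2 = a^2 - b^2) by (unfold c; apply pow2_sqrt; nra).
  assert (Hc0 : 0 < c) by (unfold c; apply sqrt_lt_R0; nra).
  assert (Hca : c < a) by nra.
  set (p1 := (a*X1, b*Y1)) in *. set (p2 := (a*X2, b*Y2)) in *. set (p3 := (a*X3, b*Y3)) in *.
  assert (dpos : forall p q : pt, p <> q -> 0 < dist p q) by exact dist_pos.
  assert (N21 : p2 <> p1) by (intro e; apply N12; auto).
  assert (N13 : p1 <> p3) by (intro e; apply N31; auto).
  unfold normal_bisects in B1, B2. cbv zeta in B1, B2.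
  pose proof (bisect_alg a b (a*X1) (b*Y1) (a*X3) (b*Y3) (a*X2) (b*Y2)
     (dist p3 p1) (dist p2 p1) Ha Hb E1 E3 E2 (dpos _ _ N31) (dpos _ _ N21)
     (dist_sq p3 p1) (dist_sq p2 p1) ltac:(intros [e e']; apply N12; unfold p1, p2; rewrite e, e'; reflexivity) B1) as V1.
  pose proof (bisect_alg a b (a*X2) (b*Y2) (a*X1) (b*Y1) (a*X3) (b*Y3)
     (dist p1 p2) (dist p3 p2) Ha Hb E2 E1 E3 (dpos _ _ N12) (dpos p3 p2 ltac:(intro e; apply N23; rewrite e; reflexivity))
     (dist_sq p1 p2) (dist_sq p3 p2) ltac:(intros [e e']; apply N23; unfold p2, p3; rewrite e, e'; reflexivity) B2) as V2.
  clear B1 B2 B3.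
  set (d12 := dist p1 p2) in *. set (d13 := dist p1 p3) in *. set (d23 := dist p2 p3) in *.
  rewrite (dist_sym p2 p1), (dist_sym p3 p1) in V1. rewrite (dist_sym p3 p2) in V2.
  fold d12 d13 in V1. fold d23 in V2.
  assert (G : forall Xi Yi Xj Yj, 1 - a*Xi*(a*Xj)/a^2 - b*Yi*(b*Yj)/b^2 = 1 - Xi*Xj - Yi*Yj)
    by (intros; field; lra).
  rewrite !G in V1, V2.
  assert (h12 : 0 < d12) by (apply dpos; exact N12).
  assert (h13 : 0 < d13) by (apply dpos; exact N13).
  assert (h23 : 0 < d23) by (apply dpos; exact N23).
  pose proof (g_pos X1 Y1 X2 Y2 C1 C2 D12) as gp12.
  set (k := (1 - X1*X2 - Y1*Y2)/d12).
  assert (hk : 0 < k) by (unfold k; apply Rdiv_lt_0_compat; lra).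
  assert (hg12 : 1 - X1*X2 - Y1*Y2 = k*d12) by (unfold k; field; lra).
  assert (hg13 : 1 - X1*X3 - Y1*Y3 = k*d13).
  { replace (k*d13) with ((1 - X1*X2 - Y1*Y2)*d13/d12) by (unfold k; field; lra).
    rewrite <- V1. field; lra. }
  assert (hg23 : 1 - X2*X3 - Y2*Y3 = k*d23).
  { replace (k*d23) with ((1 - X2*X1 - Y2*Y1)*d23/d12) by (unfold k; field; lra).
    rewrite V2. field; lra. }
  assert (Hb2 : b^2 = a^2 - c^2) by lra.
  pose proof (pair_L a b c k X1 Y1 X2 Y2 Ha Hb Hc2 C1 C2 D12 hk
     ltac:(rewrite hg12; reflexivity)) as L12.
  pose proof (pair_L a b c k X1 Y1 X3 Y3 Ha Hb Hc2 C1 C3 D13 hk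
     ltac:(rewrite hg13; reflexivity)) as L13.
  pose proof (pair_L a b c k X2 Y2 X3 Y3 Ha Hb Hc2 C2 C3 D23 hk
     ltac:(rewrite hg23; reflexivity)) as L23.
  assert (HS : 0 < k^2*c^2) by (apply Rmult_lt_0_compat; apply pow_lt; lra).
  pose proof (core1 (k^2*c^2) (1 - k^2*(2*a^2 - c^2)) X1 Y1 X2 Y2 X3 Y3 HS C1 C2 C3
     D12 D13 D23 L12 L13 L23) as HE.
  pose proof (S_lt_1 a b c (k^2) Hb2 Hb ltac:(apply pow_lt; lra) HE) as HS1.
  cbv zeta in HS1.
  destruct (core2 (k^2*c^2) (1 - k^2*(2*a^2 - c^2)) X1 Y1 X2 Y2 X3 Y3 HS HS1 HE C1 C2 C3
     D12 L12 L13 L23) as [He2 He3].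
  pose proof (final1 a c (k^2) X1 X2 X3 HE He2 He3) as F1.
  assert (fd1 : dist p1 (focus1 a b) = a + c*X1) by exact (focus_dist a b c X1 Y1 Hb Hba eq_refl C1).
  assert (fd2 : dist p2 (focus1 a b) = a + c*X2) by exact (focus_dist a b c X2 Y2 Hb Hba eq_refl C2).
  assert (fd3 : dist p3 (focus1 a b) = a + c*X3) by exact (focus_dist a b c X3 Y3 Hb Hba eq_refl C3).
  assert (fpos : forall X Y, X^2 + Y^2 = 1 -> 0 < a + c*X) by (intros; apply (fpos_lem a c X Y); lra).
  pose proof (fpos X1 Y1 C1) as q1. pose proof (fpos X2 Y2 C2) as q2. pose proof (fpos X3 Y3 C3) as q3.
  unfold focus_inversive_perimeter. cbv zeta.
  rewrite (invert_dist rho (focus1 a b) p1 p2 ltac:(rewrite fd1; lra) ltac:(rewrite fd2; lra)).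
  rewrite (invert_dist rho (focus1 a b) p2 p3 ltac:(rewrite fd2; lra) ltac:(rewrite fd3; lra)).
  rewrite (invert_dist rho (focus1 a b) p3 p1 ltac:(rewrite fd3; lra) ltac:(rewrite fd1; lra)).
  rewrite fd1, fd2, fd3, (dist_sym p3 p1). fold d12 d23 d13.
  assert (hw : forall Xi Yi Xj Yj, (1 - (k^2*c^2))*Xi*Xj + (1 + (k^2*c^2))*Yi*Yj = (1 - k^2*(2*a^2 - c^2)) ->
     (1+(k^2*c^2))*(1 - Xi*Xj - Yi*Yj) = 1 + (k^2*c^2) - (1 - k^2*(2*a^2 - c^2)) - 2*(k^2*c^2)*(Xi*Xj)).
  { intros Xi Yi Xj Yj h. rewrite <- h. ring. }
  assert (dform : forall Xi Yi Xj Yj d, (1 - (k^2*c^2))*Xi*Xj + (1 + (k^2*c^2))*Yi*Yj = (1 - k^2*(2*a^2 - c^2)) ->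
     1 - Xi*Xj - Yi*Yj = k*d -> d = (1 + (k^2*c^2) - (1 - k^2*(2*a^2 - c^2)) - 2*(k^2*c^2)*(Xi*Xj))/((1+(k^2*c^2))*k)).
  { intros Xi Yi Xj Yj d h h'. rewrite <- (hw _ _ _ _ h), h'. field. split; lra. }
  rewrite (dform _ _ _ _ _ L12 hg12), (dform _ _ _ _ _ L13 hg13), (dform _ _ _ _ _ L23 hg23).
  set (M := 2*k*(3+(k^2*c^2))/((1-(k^2*c^2))*(1+(k^2*c^2)))).
  assert (HM : 0 < M).
  { unfold M. apply Rdiv_lt_0_compat; [apply Rmult_lt_0_compat; lra | apply Rmult_lt_0_compat; lra]. }
  assert (LHS : forall T1 T2 T3, T1*(a+c*X3) + T3*(a+c*X1) + T2*(a+c*X2) = 2*k^2*(3+(k^2*c^2))*((a+c*X1)*(a+c*X2)*(a+c*X3))/(1-(k^2*c^2)) ->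
     rho^2 * (T1/((1+(k^2*c^2))*k)) / ((a+c*X1)*(a+c*X2)) + rho^2 * (T3/((1+(k^2*c^2))*k)) / ((a+c*X2)*(a+c*X3))
     + rho^2 * (T2/((1+(k^2*c^2))*k)) / ((a+c*X3)*(a+c*X1)) = rho^2 * M).
  { intros T1 T2 T3 h.
    transitivity (rho^2 * (T1*(a+c*X3) + T3*(a+c*X1) + T2*(a+c*X2)) / ((1+(k^2*c^2))*k*((a+c*X1)*(a+c*X2)*(a+c*X3)))).
    field; repeat split; lra.
    rewrite h. unfold M. field; repeat split; lra. }
  rewrite LHS.
  2:{ apply (Rmult_eq_reg_l ((k^2*c^2)*(1-(k^2*c^2))^2)).
      - rewrite F1. field. lra.
      - apply Rmult_integral_contrapositive_currified; [lra|]. apply pow_nonzero; lra. }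
  unfold delta. rewrite (delta_eq a b c (k^2) Hb2 ltac:(apply pow_lt; lra) ltac:(assert (0 < c^2) by (apply pow_lt; lra); lra) HE).
  pose proof (final2 a b c (k^2) Hb2 HE) as F2. cbv zeta in F2.
  match type of F2 with _ = _ * ?Z => assert (HZ : Z = (M*(a^2*b^2))^2) end.
  { apply (Rmult_eq_reg_l ((1 - (k^2*c^2))^2*(1+(k^2*c^2))^2)).
    - rewrite <- F2. unfold M. field. split; lra.
    - apply Rmult_integral_contrapositive_currified; apply pow_nonzero; lra. }
  rewrite HZ. rewrite sqrt_pow2.
  - field. split; lra.
  - apply Rmult_le_pos; [lra|]. apply Rmult_le_pos; apply pow2_ge_0.
Qed.
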